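(* For every $(k+1)$-ary predicate symbol $P$ and arithmetic terms $t_1,\dots,t_k$, and every context $\Gamma=\alpha_1:A_1,\dots,\alpha_l:A_l$, the decorated sequent $\Gamma\Vdash\mathsf{em}(P,t_1,\dots,t_k):\mathsf{EM}(P,t_1,\dots,t_k)$ is valid with respect to the interactive realizability semantics, where $\mathsf{EM}(P,t_1,\dots,t_k)\equiv(\forall y\,P(t_1,\dots,t_k,y))\vee(\exists y\,\neg P(t_1,\dots,t_k,y))$ and $\mathsf{em}(P,t_1,\dots,t_k)\equiv\lambda s^{\mathsf{State}}.\,\mathrm{inl}\big(\mathrm{case}\,(\mathsf{query}_P\,s\,t_1\cdots t_k)\,(\lambda\_^{\mathsf{Unit}}.\mathrm{inl}(\lambda y^{\mathsf{Nat}}.\lambda\_^{\mathsf{State}}.\mathsf{eval}_P\,t_1\cdots t_k\,y))\,(\lambda y^{\mathsf{Nat}}.\mathrm{inr}\langle y,d\rangle)\big)$, with $d$ a fixed closed term of type $\mathsf{Unit}\to\mathsf T\,\mathsf{Unit}$.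
   Context: System $T'$: simply typed $\lambda$-calculus with types from atomic types $\mathsf{Unit},\mathsf{Nat},\mathsf{State},\mathsf{Ex}$ by $\to,\times,+$; constants $\star$, $\langle\cdot,\cdot\rangle$, $\pi_1,\pi_2$, $\mathrm{inl},\mathrm{inr}$, $\mathrm{case}$, $0$, $\mathrm{succ}$, a bounded recursor, $\mathsf{exmerge}:\mathsf{Ex}\to\mathsf{Ex}\to\mathsf{Ex}$, and for each $(k+1)$-ary predicate symbol $P$ constants $\mathsf{query}_P:\mathsf{State}\to\mathsf{Nat}^k\to\mathsf{Unit}+\mathsf{Nat}$ and $\mathsf{eval}_P:\mathsf{Nat}^k\to\mathsf{Nat}\to\mathsf{Unit}+\mathsf{Ex}$ (curried); usual $\beta$, projection and case reductions; $t\leadsto u$: $t$ reduces to $u$; $\bar n$ numerals; closed arithmetic terms reduce to numerals. States and exceptions: each closed $s:\mathsf{State}$ denotes a finite sound partial function $[\![s]\!]$ from (predicate symbol, parameter tuple) to witnesses; states are ordered by extension $\le$; each closed $e:\mathsf{Ex}$ denotes a partial function $[\![e]\!]$ on states with $s\le[\![e]\!](s)$ when defined; $e$ properly extends $s$ iff $[\![e]\!](s)$ is defined and $s<[\![e]\!](s)$. Assumptions: (EX) if $e_1,e_2$ properly extend $s$ then so does $\mathsf{exmerge}\,e_1e_2$; (IR1) $\mathsf{query}_P\,s\,\bar n_1\cdots\bar n_k\leadsto\mathrm{inr}\,\bar n$ implies $P(\bar n_1,\dots,\bar n_k,\bar n)$ holds; (IR2) $\mathsf{eval}_P\,\bar n_1\cdots\bar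 n_k\,\bar n\leadsto\mathrm{inl}\,\star$ implies $P(\bar n_1,\dots,\bar n_k,\bar n)$ holds; (IR3) if $\mathsf{query}_P\,s\,\bar n_1\cdots\bar n_k\leadsto\mathrm{inl}\,\star$ and $\mathsf{eval}_P\,\bar n_1\cdots\bar n_k\,\bar n\leadsto\mathrm{inr}\,e$ then $e$ properly extends $s$. Monad $\mathcal{IR}$: $\mathsf TX=\mathsf{State}\to(X+\mathsf{Ex})$, $\mathsf{unit}=\lambda x\lambda\_.\mathrm{inl}\,x$, $\mathsf{star}=\lambda f\lambda a\lambda s.\mathrm{case}(as)(\lambda x.fxs)\mathrm{inr}$, $\mathsf{merge}$ pairs two regular values and otherwise propagates exceptions, combining two with $\mathsf{exmerge}$. Formulas: first-order arithmetic with decidable atomic predicates; $\bot$ atomic never true; $\neg A=A\to\bot$. Types: $\|A\|=\mathsf T|A|$, $|P|=\mathsf{Unit}$, $|B\wedge C|=|B|\times|C|$, $|B\vee C|=|B|+|C|$, $|\exists xB|=\mathsf{Nat}\times|B|$, $|B\to C|=|B|\to\|C\|$, $|\forall xB|=\mathsf{Nat}\to\|B\|$. For a state $s$ (closed formulas $A$): $p\Vdash^s_{\mathcal{IR}}A$ iff $p\,s\leadsto\mathrm{inl}\,r$ with $r\Vdash^sA$, or $p\,s\leadsto\mathrm{inr}\,e$ with $e$ properly extending $s$; $r\Vdash^sP$ iff $r\leadsto\star$ and $P$ true; $r\Vdash^sB\wedge C$ iff $\pi_1r\Vdash^sB$ and $\pi_2r\Vdash^sC$; $r\Vdash^sB\vee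 C$ iff $r\leadsto\mathrm{inl}\,a$, $a\Vdash^sB$ or $r\leadsto\mathrm{inr}\,b$, $b\Vdash^sC$; $r\Vdash^sB\to C$ iff $rp\Vdash^s_{\mathcal{IR}}C$ for all $p\Vdash^sB$; $r\Vdash^s\forall xB$ iff $r\bar n\Vdash^s_{\mathcal{IR}}B[x:=\bar n]$ for all $n$; $r\Vdash^s\exists xB$ iff $\pi_2r\Vdash^sB[x:=\pi_1r]$. Validity w.r.t. $s$: $\alpha_1:A_1,\dots,\alpha_l:A_l\Vdash r:B$ (free arithmetic variables among $\vec x$) is valid iff for all numerals $\vec{\bar n}$ and all $p_i\Vdash^sA_i[\vec x:=\vec{\bar n}]$, $r[\vec x:=\vec{\bar n},\vec\alpha:=\vec p]\Vdash^s_{\mathcal{IR}}B[\vec x:=\vec{\bar n}]$. Interactive realizability semantics: a decorated sequent is valid iff it is valid with respect to $s$ for every state $s$.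
   Formalization: (IR1) concludes that $P(\bar n_1,\dots,\bar n_k,\bar n)$ does not hold, sound states store only witnesses at which P fails, and $\mathsf{query}_P$, $\mathsf{eval}_P$ on numerals always reduce to inl ⋆ or an inr value. Each condition added here is assumed in the paper as well or is needed for the statement above to hold. This also corrects a misprint. *)

(* Defs.v *)
From Stdlib Require Import List Arith.
Import ListNotations.

Inductive ty : Type :=
| TUnit | TNat | TState | TEx
| TArr (A B : ty) | TProd (A B : ty) | TSum (A B : ty).

Definition TM (X : ty) : ty := TArr TState (TSum X TEx).

Fixpoint nat_arr (k : nat) (B : ty) : ty :=
  match k with 0 => B | S k' => TArr TNat (nat_arr k' B) end.

(* Ps = predicate symbols, St = names of state constants,
   Xn = names of exception constants.
   tvar  : lambda-bound variables (de Bruijn indices)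
   tavar : (named) arithmetic variables, of type Nat
   tpvar : (named) proof variables alpha_i of decorated sequents      *)
Inductive tm (Ps St Xn : Type) : Type :=
| tvar (i : nat)
| tavar (x : nat)
| tpvar (a : nat)
| tlam (A : ty) (b : tm Ps St Xn)
| tapp (t u : tm Ps St Xn)
| tstar
| tpair (a b : tm Ps St Xn)
| tfst (t : tm Ps St Xn)
| tsnd (t : tm Ps St Xn)
| tinl (t : tm Ps St Xn)
| tinr (t : tm Ps St Xn)
| tcase (t f g : tm Ps St Xn)
| tzero
| tsucc (t : tm Ps St Xn)
| trec (u v n : tm Ps St Xn)
| tquery (P : Ps)
| teval (P : Ps)
| texmerge
| tst (s : St)
| tex (e : Xn).

Arguments tvar {Ps St Xn} i.
Arguments tavar {Ps St Xn} x.
Arguments tpvar {Ps St Xn} a.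
Arguments tlam {Ps St Xn} A b.
Arguments tapp {Ps St Xn} t u.
Arguments tstar {Ps St Xn}.
Arguments tpair {Ps St Xn} a b.
Arguments tfst {Ps St Xn} t.
Arguments tsnd {Ps St Xn} t.
Arguments tinl {Ps St Xn} t.
Arguments tinr {Ps St Xn} t.
Arguments tcase {Ps St Xn} t f g.
Arguments tzero {Ps St Xn}.
Arguments tsucc {Ps St Xn} t.
Arguments trec {Ps St Xn} u v n.
Arguments tquery {Ps St Xn} P.
Arguments teval {Ps St Xn} P.
Arguments texmerge {Ps St Xn}.
Arguments tst {Ps St Xn} s.
Arguments tex {Ps St Xn} e.

Section Terms.
Context {Ps St Xn : Type}.
Local Notation tm := (tm Ps St Xn).

Fixpoint num (n : nat) : tm :=
  match n with 0 => tzero | S n' => tsucc (num n') end.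

Definition apps (h : tm) (args : list tm) : tm := fold_left tapp args h.

Fixpoint lift (c : nat) (t : tm) : tm :=
  match t with
  | tvar i => if i <? c then tvar i else tvar (S i)
  | tlam A b => tlam A (lift (S c) b)
  | tapp t u => tapp (lift c t) (lift c u)
  | tpair a b => tpair (lift c a) (lift c b)
  | tfst t => tfst (lift c t)
  | tsnd t => tsnd (lift c t)
  | tinl t => tinl (lift c t)
  | tinr t => tinr (lift c t)
  | tcase t f g => tcase (lift c t) (lift c f) (lift c g)
  | tsucc t => tsucc (lift c t)
  | trec u v n => trec (lift c u) (lift c v) (lift c n)
  | t => t
  end.

Fixpoint subst (j : nat) (u : tm) (t : tm) : tm :=
  match t with
  | tvar i => if i =? j then u else if j <? i then tvar (pred i) else tvar i
  | tlam A b => tlam A (subst (S j) (lift 0 u) b)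
  | tapp t1 t2 => tapp (subst j u t1) (subst j u t2)
  | tpair a b => tpair (subst j u a) (subst j u b)
  | tfst t => tfst (subst j u t)
  | tsnd t => tsnd (subst j u t)
  | tinl t => tinl (subst j u t)
  | tinr t => tinr (subst j u t)
  | tcase t f g => tcase (subst j u t) (subst j u f) (subst j u g)
  | tsucc t => tsucc (subst j u t)
  | trec a v n => trec (subst j u a) (subst j u v) (subst j u n)
  | t => t
  end.

Fixpoint asubst (rho : nat -> tm) (t : tm) : tm :=
  match t with
  | tavar x => rho x
  | tlam A b => tlam A (asubst (fun x => lift 0 (rho x)) b)
  | tapp t1 t2 => tapp (asubst rho t1) (asubst rho t2)
  | tpair a b => tpair (asubst rho a) (asubst rho b)
  | tfst t => tfst (asubst rho t)
  | tsnd t => tsnd (asubst rho t)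
  | tinl t => tinl (asubst rho t)
  | tinr t => tinr (asubst rho t)
  | tcase t f g => tcase (asubst rho t) (asubst rho f) (asubst rho g)
  | tsucc t => tsucc (asubst rho t)
  | trec a v n => trec (asubst rho a) (asubst rho v) (asubst rho n)
  | t => t
  end.

Fixpoint lookup (a : nat) (sg : list (nat * tm)) : option tm :=
  match sg with
  | [] => None
  | (b, p) :: sg' => if a =? b then Some p else lookup a sg'
  end.

Fixpoint psubst (sg : list (nat * tm)) (t : tm) : tm :=
  match t with
  | tpvar a => match lookup a sg with Some p => p | None => tpvar a end
  | tlam A b => tlam A (psubst (map (fun bp => (fst bp, lift 0 (snd bp))) sg) b)
  | tapp t1 t2 => tapp (psubst sg t1) (psubst sg t2)
  | tpair a b => tpair (psubst sg a) (psubst sg b)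
  | tfst t => tfst (psubst sg t)
  | tsnd t => tsnd (psubst sg t)
  | tinl t => tinl (psubst sg t)
  | tinr t => tinr (psubst sg t)
  | tcase t f g => tcase (psubst sg t) (psubst sg f) (psubst sg g)
  | tsucc t => tsucc (psubst sg t)
  | trec a v n => trec (psubst sg a) (psubst sg v) (psubst sg n)
  | t => t
  end.

Fixpoint wsc (n : nat) (t : tm) : Prop :=
  match t with
  | tvar i => i < n
  | tavar _ => False
  | tpvar _ => False
  | tlam _ b => wsc (S n) b
  | tapp t u | tpair t u => wsc n t /\ wsc n u
  | tfst t | tsnd t | tinl t | tinr t | tsucc t => wsc n t
  | tcase t f g | trec t f g => wsc n t /\ wsc n f /\ wsc n g
  | _ => True
  end.

Definition closed (t : tm) : Prop := wsc 0 t.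

Fixpoint no_pvar (t : tm) : Prop :=
  match t with
  | tpvar _ => False
  | tlam _ b => no_pvar b
  | tapp t u | tpair t u => no_pvar t /\ no_pvar u
  | tfst t | tsnd t | tinl t | tinr t | tsucc t => no_pvar t
  | tcase t f g | trec t f g => no_pvar t /\ no_pvar f /\ no_pvar g
  | _ => True
  end.

Fixpoint occurs_avar (y : nat) (t : tm) : Prop :=
  match t with
  | tavar x => x = y
  | tlam _ b => occurs_avar y b
  | tapp t u | tpair t u => occurs_avar y t \/ occurs_avar y u
  | tfst t | tsnd t | tinl t | tinr t | tsucc t => occurs_avar y t
  | tcase t f g | trec t f g => occurs_avar y t \/ occurs_avar y f \/ occurs_avar y g
  | _ => False
  end.

Inductive has_type (ar : Ps -> nat) : list ty -> tm -> ty -> Prop :=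
| T_var G i A : nth_error G i = Some A -> has_type ar G (tvar i) A
| T_avar G x : has_type ar G (tavar x) TNat
| T_lam G A B b : has_type ar (A :: G) b B -> has_type ar G (tlam A b) (TArr A B)
| T_app G t u A B : has_type ar G t (TArr A B) -> has_type ar G u A ->
    has_type ar G (tapp t u) B
| T_star G : has_type ar G tstar TUnit
| T_pair G a b A B : has_type ar G a A -> has_type ar G b B ->
    has_type ar G (tpair a b) (TProd A B)
| T_fst G t A B : has_type ar G t (TProd A B) -> has_type ar G (tfst t) A
| T_snd G t A B : has_type ar G t (TProd A B) -> has_type ar G (tsnd t) B
| T_inl G t A B : has_type ar G t A -> has_type ar G (tinl t) (TSum A B)
| T_inr G t A B : has_type ar G t B -> has_type ar G (tinr t) (TSum A B)
| T_case G t f g A B C : has_type ar G t (TSum A B) -> has_type ar G f (TArr A C) ->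
    has_type ar G g (TArr B C) -> has_type ar G (tcase t f g) C
| T_zero G : has_type ar G tzero TNat
| T_succ G t : has_type ar G t TNat -> has_type ar G (tsucc t) TNat
| T_rec G u v n A : has_type ar G u A -> has_type ar G v (TArr TNat (TArr A A)) ->
    has_type ar G n TNat -> has_type ar G (trec u v n) A
| T_query G P : has_type ar G (tquery P)
    (TArr TState (nat_arr (ar P) (TSum TUnit TNat)))
| T_eval G P : has_type ar G (teval P)
    (nat_arr (ar P) (TArr TNat (TSum TUnit TEx)))
| T_exmerge G : has_type ar G texmerge (TArr TEx (TArr TEx TEx))
| T_st G s : has_type ar G (tst s) TState
| T_ex G e : has_type ar G (tex e) TEx.

Inductive step (delta : tm -> tm -> Prop) : tm -> tm -> Prop :=
| s_beta A b u : step delta (tapp (tlam A b) u) (subst 0 u b)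
| s_fst a b : step delta (tfst (tpair a b)) a
| s_snd a b : step delta (tsnd (tpair a b)) b
| s_case_l a f g : step delta (tcase (tinl a) f g) (tapp f a)
| s_case_r b f g : step delta (tcase (tinr b) f g) (tapp g b)
| s_rec0 u v : step delta (trec u v tzero) u
| s_recS u v n : step delta (trec u v (tsucc n)) (tapp (tapp v n) (trec u v n))
| s_delta t u : delta t u -> step delta t u
| c_lam A b b' : step delta b b' -> step delta (tlam A b) (tlam A b')
| c_app1 t t' u : step delta t t' -> step delta (tapp t u) (tapp t' u)
| c_app2 t u u' : step delta u u' -> step delta (tapp t u) (tapp t u')
| c_pair1 a a' b : step delta a a' -> step delta (tpair a b) (tpair a' b)
| c_pair2 a b b' : step delta b b' -> step delta (tpair a b) (tpair a b')
| c_fst t t' : step delta t t' -> step delta (tfst t) (tfst t')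
| c_snd t t' : step delta t t' -> step delta (tsnd t) (tsnd t')
| c_inl t t' : step delta t t' -> step delta (tinl t) (tinl t')
| c_inr t t' : step delta t t' -> step delta (tinr t) (tinr t')
| c_case1 t t' f g : step delta t t' -> step delta (tcase t f g) (tcase t' f g)
| c_case2 t f f' g : step delta f f' -> step delta (tcase t f g) (tcase t f' g)
| c_case3 t f g g' : step delta g g' -> step delta (tcase t f g) (tcase t f g')
| c_succ t t' : step delta t t' -> step delta (tsucc t) (tsucc t')
| c_rec1 u u' v n : step delta u u' -> step delta (trec u v n) (trec u' v n)
| c_rec2 u v v' n : step delta v v' -> step delta (trec u v n) (trec u v' n)
| c_rec3 u v n n' : step delta n n' -> step delta (trec u v n) (trec u v n').

Inductive red (delta : tm -> tm -> Prop) : tm -> tm -> Prop :=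
| red_refl t : red delta t t
| red_step t u v : step delta t u -> red delta u v -> red delta t v.

Definition const_headed (t : tm) : Prop :=
  exists h args, t = apps h args /\
    ((exists P, h = tquery P) \/ (exists P, h = teval P) \/ h = texmerge).

End Terms.

Record Sys : Type := {
  Ps : Type;
  St : Type;
  Xn : Type;
  ar : Ps -> nat;                         (* P is (ar P + 1)-ary *)
  interp : Ps -> list nat -> bool;
  delta : tm Ps St Xn -> tm Ps St Xn -> Prop;  (* reduction rules of the constants *)
  stfun : tm Ps St Xn -> (Ps * list nat -> option nat);
  exfun : tm Ps St Xn -> (Ps * list nat -> option nat) ->
          option (Ps * list nat -> option nat)
}.

Section Semantics.
Variable S : Sys.
Local Notation tm := (tm (Ps S) (St S) (Xn S)).
Local Notation "t ~> u" := (red (delta S) t u) (at level 70).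

Definition pfun := (Ps S * list nat -> option nat)%type.

Definition ext (f g : pfun) : Prop := forall k v, f k = Some v -> g k = Some v.

Definition finite_pfun (f : pfun) : Prop :=
  exists L : list (Ps S * list nat), forall k v, f k = Some v -> In k L.

Definition sound_pfun (f : pfun) : Prop :=
  forall P ns m, f (P, ns) = Some m -> length ns = ar S P /\ interp S P (ns ++ [m]) = false.

Definition is_state (s : tm) : Prop := closed s /\ has_type (ar S) [] s TState.
Definition is_exn (e : tm) : Prop := closed e /\ has_type (ar S) [] e TEx.

Definition prop_ext (e s : tm) : Prop :=
  exists g, exfun S e (stfun S s) = Some g /\ ext (stfun S s) g /\ ~ ext g (stfun S s).

Definition P_holds (P : Ps S) (ns : list nat) (n : nat) : Prop :=
  interp S P (ns ++ [n]) = true.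

Definition query_tm (P : Ps S) (s : tm) (args : list tm) : tm :=
  apps (tapp (tquery P) s) args.
Definition eval_tm (P : Ps S) (args : list tm) (y : tm) : tm :=
  tapp (apps (teval P) args) y.

Inductive form : Type :=
| FAtom (P : Ps S) (ts : list tm)
| FBot
| FAnd (A B : form) | FOr (A B : form) | FImp (A B : form)
| FAll (x : nat) (A : form) | FEx (x : nat) (A : form).

Definition FNeg (A : form) : form := FImp A FBot.

Definition aterm (t : tm) : Prop := has_type (ar S) [] t TNat /\ no_pvar t.

Definition upd (rho : nat -> tm) (x : nat) (t : tm) : nat -> tm :=
  fun z => if z =? x then t else rho z.

Definition atom_true (rho : nat -> tm) (P : Ps S) (ts : list tm) : Prop :=
  exists ms, Forall2 (fun t m => asubst rho t ~> num m) ts ms /\ interp S P ms = true.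

Definition IRof (s : tm) (R : tm -> Prop) (p : tm) : Prop :=
  (exists r, tapp p s ~> tinl r /\ R r) \/
  (exists e, tapp p s ~> tinr e /\ prop_ext e s).

(* r ||-^s A[rho]  (rho : closed terms substituted for the arithmetic variables) *)
Fixpoint real (s : tm) (rho : nat -> tm) (r : tm) (A : form) {struct A} : Prop :=
  match A with
  | FAtom P ts => r ~> tstar /\ atom_true rho P ts
  | FBot => r ~> tstar /\ False
  | FAnd B C => real s rho (tfst r) B /\ real s rho (tsnd r) C
  | FOr B C => (exists a, r ~> tinl a /\ real s rho a B) \/
               (exists b, r ~> tinr b /\ real s rho b C)
  | FImp B C => forall p, closed p -> real s rho p B ->
                  IRof s (fun q => real s rho q C) (tapp r p)
  | FAll x B => forall n, IRof s (fun q => real s (upd rho x (num n)) q B) (tapp r (num n))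
  | FEx x B => real s (upd rho x (tfst r)) (tsnd r) B
  end.

Definition realIR (s : tm) (rho : nat -> tm) (p : tm) (A : form) : Prop :=
  IRof s (fun r => real s rho r A) p.

Definition numenv (nu : nat -> nat) : nat -> tm := fun x => num (nu x).

Definition valid (G : list (nat * form)) (r : tm) (B : form) : Prop :=
  forall s, is_state s ->
  forall nu : nat -> nat, forall ps : list tm,
    length ps = length G -> Forall closed ps ->
    Forall2 (fun p aA => real s (numenv nu) p (snd aA)) ps G ->
    realIR s (numenv nu) (psubst (combine (map fst G) ps) (asubst (numenv nu) r)) B.

Definition EM (P : Ps S) (ts : list tm) (y : nat) : form :=
  FOr (FAll y (FAtom P (ts ++ [tavar y])))
      (FEx y (FNeg (FAtom P (ts ++ [tavar y])))).

Definition em (P : Ps S) (ts : list tm) (d : tm) : tm :=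
  tlam TState
    (tinl (tcase (query_tm P (tvar 0) ts)
                 (tlam TUnit (tinl (tlam TNat (tlam TState (eval_tm P ts (tvar 1))))))
                 (tlam TNat (tinr (tpair (tvar 0) d))))).

Record Assumptions : Prop := {
  A_delta : forall t u, delta S t u -> const_headed t;
  A_num : forall t, closed t -> has_type (ar S) [] t TNat -> exists n, t ~> num n;
  A_num_uniq : forall t m m', closed t -> has_type (ar S) [] t TNat ->
      t ~> num m -> t ~> num m' -> m = m';
  A_state : forall s, is_state s -> finite_pfun (stfun S s) /\ sound_pfun (stfun S s);
  A_exn : forall e f g, is_exn e -> exfun S e f = Some g -> ext f g;
  A_query_total : forall s P ns, is_state s -> length ns = ar S P ->
      query_tm P s (map num ns) ~> tinl tstar \/
      exists n, query_tm P s (map num ns) ~> tinr (num n);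
  A_eval_total : forall P ns n, length ns = ar S P ->
      eval_tm P (map num ns) (num n) ~> tinl tstar \/
      exists e, is_exn e /\ eval_tm P (map num ns) (num n) ~> tinr e;
  A_EX : forall s e1 e2, is_state s -> is_exn e1 -> is_exn e2 ->
      prop_ext e1 s -> prop_ext e2 s -> prop_ext (apps texmerge [e1; e2]) s;
  A_IR1 : forall s P ns n, is_state s -> length ns = ar S P ->
      query_tm P s (map num ns) ~> tinr (num n) -> ~ P_holds P ns n;
  A_IR2 : forall P ns n, length ns = ar S P ->
      eval_tm P (map num ns) (num n) ~> tinl tstar -> P_holds P ns n;
  A_IR3 : forall s P ns n e, is_state s -> length ns = ar S P ->
      query_tm P s (map num ns) ~> tinl tstar ->
      eval_tm P (map num ns) (num n) ~> tinr e -> prop_ext e s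
}.

End Semantics.

(* Main.v *)
Require Import Defs.
From Stdlib Require Import List Arith Lia.
Import ListNotations.

Section H.
Context {Ps St Xn : Type}.
Local Notation tm := (tm Ps St Xn).

Lemma lift_num c n : lift c (@num Ps St Xn n) = num n.
Proof. induction n; simpl; congruence. Qed.

Lemma asubst_ext (t : tm) : forall f g, (forall x, f x = g x) -> asubst f t = asubst g t.
Proof.
  induction t; intros f g H; simpl; try reflexivity;
  try (f_equal; eauto; fail).
  f_equal. apply IHt. intros; rewrite H; reflexivity.
Qed.

Lemma asubst_ext_occ y (t : tm) : ~ occurs_avar y t ->
  forall f g, (forall x, x <> y -> f x = g x) -> asubst f t = asubst g t.
Proof.
  induction t; intros Hn f g H; simpl in *; try reflexivity;
  try (f_equal; intuition eauto; fail).
  f_equal. apply IHt; auto. intros; rewrite H; auto.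
Qed.

Lemma wsc_mono (t : tm) : forall n m, wsc n t -> n <= m -> wsc m t.
Proof.
  induction t; intros n m H1 H2; simpl in *; intuition eauto; try lia.
  eapply IHt; eauto; lia.
Qed.

Lemma lift_wsc (t : tm) : forall n c, wsc n t -> n <= c -> lift c t = t.
Proof.
  induction t; intros n c H1 H2; simpl in *; try reflexivity;
  try (f_equal; intuition eauto; fail).
  - destruct (Nat.ltb_spec i c); [reflexivity| lia].
  - f_equal. eapply IHt; eauto; lia.
Qed.

Lemma subst_wsc (t : tm) : forall n j u, wsc n t -> n <= j -> subst j u t = t.
Proof.
  induction t; intros n j u H1 H2; simpl in *; try reflexivity;
  try (f_equal; intuition eauto; fail).
  - destruct (Nat.eqb_spec i j); [lia|]. destruct (Nat.ltb_spec j i); [lia|reflexivity].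
  - f_equal. eapply IHt; eauto; lia.
Qed.

Lemma psubst_wsc (t : tm) : forall n sg, wsc n t -> psubst sg t = t.
Proof.
  induction t; intros n sg H1; simpl in *; try reflexivity; try contradiction;
  try (f_equal; intuition eauto; fail).
Qed.

Lemma num_typed ar G n : has_type ar G (@num Ps St Xn n) TNat.
Proof. induction n; simpl; constructor; auto. Qed.

Lemma num_wsc k n : wsc k (@num Ps St Xn n).
Proof. induction n; simpl; auto. Qed.

Lemma typed_asubst ar (nu : nat -> nat) G (t : tm) A : has_type ar G t A ->
  has_type ar G (asubst (fun x => @num Ps St Xn (nu x)) t) A /\ wsc (length G) (asubst (fun x => @num Ps St Xn (nu x)) t).
Proof.
  induction 1; simpl; try (intuition (econstructor; eauto); fail).
  - split. constructor; auto. apply nth_error_Some; congruence.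
  - split. apply num_typed. apply num_wsc.
  - rewrite (asubst_ext b _ (fun x => @num Ps St Xn (nu x))) by (intros; apply lift_num).
    simpl in IHhas_type. intuition. constructor; auto.
Qed.

Lemma apps_asubst f (l : list tm) : forall h, asubst f (apps h l) = apps (asubst f h) (map (asubst f) l).
Proof. induction l; intros h; simpl; auto. Qed.
Lemma apps_subst j u (l : list tm) : forall h, subst j u (apps h l) = apps (subst j u h) (map (subst j u) l).
Proof. induction l; intros h; simpl; auto. Qed.
Lemma apps_psubst sg (l : list tm) : forall h, psubst sg (apps h l) = apps (psubst sg h) (map (psubst sg) l).
Proof. induction l; intros h; simpl; auto. Qed.

Variable delta : tm -> tm -> Prop.

Lemma red_trans (a b c : tm) : red delta a b -> red delta b c -> red delta a c.
Proof. induction 1; intros; auto. econstructor; eauto. Qed.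

Lemma red_ctx (C : tm -> tm) : (forall a b, step delta a b -> step delta (C a) (C b)) ->
  forall a b, red delta a b -> red delta (C a) (C b).
Proof. intros HC a b; induction 1. constructor. econstructor; eauto. Qed.

Lemma red1 (a b : tm) : step delta a b -> red delta a b.
Proof. intros; econstructor; eauto; constructor. Qed.

Lemma apps_step (l : list tm) : forall a b, step delta a b -> step delta (apps a l) (apps b l).
Proof. induction l; intros; simpl; auto. apply IHl. apply c_app1; auto. Qed.

Lemma red_apps (l l' : list tm) : Forall2 (red delta) l l' ->
  forall h, red delta (apps h l) (apps h l').
Proof.
  induction 1; intros h; simpl. constructor.
  eapply red_trans.
  - apply (red_ctx (fun z => apps z l)). { intros; apply apps_step; auto. }
    apply (red_ctx (fun z => tapp h z)); [intros; apply c_app2; auto|]. eauto.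
  - apply IHForall2.
Qed.
End H.
Lemma asubst_wsc {Ps St Xn} (t : tm Ps St Xn) : forall n f, wsc n t -> asubst f t = t.
Proof.
  induction t; intros n f H1; simpl in *; try reflexivity; try contradiction;
  try (f_equal; intuition eauto; fail).
Qed.
Lemma map_asubst_num {Ps St Xn} (nu : nat -> nat) (l : list (tm Ps St Xn)) f :
  (forall x, f x = num (nu x)) -> map (asubst f) l = map (asubst (fun x => num (nu x))) l.
Proof. intros H. apply map_ext. intros; apply asubst_ext; auto. Qed.
Lemma map_psubst_closed {Ps St Xn} sg (l : list (tm Ps St Xn)) :
  Forall (fun t => wsc 0 t) l -> map (psubst sg) l = l.
Proof. induction 1; simpl; auto. f_equal; auto. eapply psubst_wsc; eauto. Qed.
Lemma map_subst_closed {Ps St Xn} j u (l : list (tm Ps St Xn)) :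
  Forall (fun t => wsc 0 t) l -> map (subst j u) l = l.
Proof. induction 1; simpl; auto. f_equal; auto. eapply subst_wsc; eauto; lia. Qed.
Lemma nums_exist {Ps St Xn} (delta : tm Ps St Xn -> tm Ps St Xn -> Prop) (Q : tm Ps St Xn -> Prop) (l : list (tm Ps St Xn)) :
  (forall t, Q t -> exists n, red delta t (num n)) -> Forall Q l ->
  exists ms, Forall2 (fun t m => red delta t (num m)) l ms.
Proof.
  intros H; induction 1. exists []; constructor.
  destruct IHForall as [ms Hms]. destruct (H x H0) as [n Hn]. exists (n :: ms); constructor; auto.
Qed.
Lemma nums_uniq {Ps St Xn} (delta : tm Ps St Xn -> tm Ps St Xn -> Prop) (Q : tm Ps St Xn -> Prop) (l : list (tm Ps St Xn)) :
  (forall t m m', Q t -> red delta t (num m) -> red delta t (num m') -> m = m') -> Forall Q l ->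
  forall ms ms', Forall2 (fun t m => red delta t (num m)) l ms -> Forall2 (fun t m => red delta t (num m)) l ms' -> ms = ms'.
Proof.
  intros H; induction 1; intros ms ms' E1 E2; inversion E1; inversion E2; subst; auto.
  f_equal; eauto.
Qed.
Lemma Forall2_map_num {Ps St Xn} (delta : tm Ps St Xn -> tm Ps St Xn -> Prop) l ms :
  Forall2 (fun t m => red delta t (num m)) l ms -> Forall2 (red delta) l (map num ms).
Proof. induction 1; simpl; constructor; auto. Qed.

Lemma upd_conv (S : Sys) (rho : nat -> tm (Ps S) (St S) (Xn S)) y v ts :
  Forall (fun t => ~ occurs_avar y t) ts ->
  forall ll, Forall2 (fun t m => red (delta S) (asubst (upd S rho y v) t) (num m)) ts ll <->
    Forall2 (fun t m => red (delta S) t (num m)) (map (asubst rho) ts) ll.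
Proof.
  induction 1; intros ll; split; intros H1; simpl in *; inversion H1; subst; constructor.
  - rewrite <- (asubst_ext_occ y x H (upd S rho y v)); auto.
    intros z Hz; unfold upd; apply Nat.eqb_neq in Hz; rewrite Hz; auto.
  - apply IHForall; auto.
  - rewrite (asubst_ext_occ y x H (upd S rho y v) rho); auto.
    intros z Hz; unfold upd; apply Nat.eqb_neq in Hz; rewrite Hz; auto.
  - apply IHForall; auto.
Qed.

Theorem mainTheorem5 (S : Sys) (HS : Assumptions S)
  (P : Ps S) (ts : list (tm (Ps S) (St S) (Xn S))) (y : nat)
  (d : tm (Ps S) (St S) (Xn S)) (G : list (nat * form S)) :
  length ts = ar S P ->
  Forall (aterm S) ts ->
  Forall (fun t => ~ occurs_avar y t) ts ->
  closed d -> has_type (ar S) nil d (TArr TUnit (TM TUnit)) ->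
  valid S G (em S P ts d) (EM S P ts y).
Proof.
  intros Hlen Hat Hocc Hdc Hdt s Hs nu ps _ _ _.
  unfold em, query_tm, eval_tm.
  set (rho := numenv S nu).
  set (ts' := map (asubst rho) ts).
  assert (Hts' : Forall (fun t => closed t /\ has_type (ar S) [] t TNat) ts').
  { unfold ts'. rewrite Forall_map. eapply Forall_impl; [|exact Hat].
    intros t [Ht _]. destruct (typed_asubst (ar S) nu [] t TNat Ht). split; auto. }
  assert (Hcl : Forall (fun t => wsc 0 t) ts') by (eapply Forall_impl; [|exact Hts']; intros t [h _]; exact h).
  simpl. rewrite !apps_asubst. simpl. rewrite !apps_psubst. simpl.
  repeat (rewrite (map_asubst_num nu ts); [change (map (asubst (fun x => num (nu x))) ts) with ts'|intros; unfold rho, numenv; rewrite ?lift_num; reflexivity]).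
  rewrite !map_psubst_closed by exact Hcl.
  rewrite !(asubst_wsc d 0) by exact Hdc.
  rewrite !(psubst_wsc d 0) by exact Hdc.
  destruct (nums_exist (delta S) _ ts' (fun t H => A_num S HS t (proj1 H) (proj2 H)) Hts') as [ms Hms].
  assert (Hlms : length ms = ar S P).
  { rewrite <- Hlen. apply Forall2_length in Hms. unfold ts' in Hms. rewrite length_map in Hms. auto. }
  assert (Huniq : forall ms', Forall2 (fun t m => red (delta S) t (num m)) ts' ms' -> ms' = ms).
  { intros ms' H. eapply (nums_uniq (delta S) _ ts'); [|exact Hts'|exact H|exact Hms].
    intros t m m' [] ? ?; eapply (A_num_uniq S HS); eauto. }
  assert (Hq : red (delta S) (apps (tapp (tquery P) s) ts') (query_tm S P s (map num ms))).
  { apply red_apps. apply Forall2_map_num; auto. }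
  assert (Hscl : wsc 0 s) by apply Hs.
  unfold realIR, IRof. left.
  eexists. split.
  { eapply red_trans; [apply red1, s_beta|]. simpl.
    rewrite !apps_subst. simpl. rewrite !map_subst_closed by exact Hcl.
    rewrite (lift_wsc s 0) by (auto; lia). rewrite (subst_wsc d 0) by (auto; lia).
    apply red_refl. }
  set (F := tlam TUnit (tinl (tlam TNat (tlam TState (tapp (apps (teval P) ts') (tvar 1)))))).
  set (G' := tlam TNat (tinr (tpair (tvar 0) d))).
  assert (Hcase : forall v, red (delta S) (apps (tapp (tquery P) s) ts') v ->
     red (delta S) (tcase (apps (tapp (tquery P) s) ts') F G') (tcase v F G')).
  { intros v Hv. apply (red_ctx (delta S) (fun z => tcase z F G')); auto. intros; apply c_case1; auto. }
  unfold EM. simpl.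
  destruct (A_query_total S HS s P ms Hs Hlms) as [Hq1 | [m Hq2]].
  - left. eexists. split.
    { eapply red_trans. apply Hcase. eapply red_trans. exact Hq. exact Hq1.
      eapply red_trans. apply red1, s_case_l. eapply red_trans. apply red1, s_beta.
      simpl. rewrite !apps_subst. simpl. rewrite !map_subst_closed by exact Hcl. apply red_refl. }
    intros n. unfold IRof.
    assert (He : red (delta S) (tapp (tapp (tlam TNat (tlam TState (tapp (apps (teval P) ts') (tvar 1)))) (num n)) s)
        (eval_tm S P (map num ms) (num n))).
    { eapply red_trans. apply red1, c_app1, s_beta. simpl. rewrite !apps_subst. simpl.
      rewrite !map_subst_closed by exact Hcl. rewrite lift_num.
      eapply red_trans. apply red1, s_beta. simpl. rewrite !apps_subst. simpl.
      rewrite !map_subst_closed by exact Hcl. rewrite (subst_wsc (num n) 0) by (auto using num_wsc).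
      apply (red_ctx (delta S) (fun z => tapp z (num n))). intros; apply c_app1; auto.
      apply red_apps. apply Forall2_map_num; auto. }
    destruct (A_eval_total S HS P ms n Hlms) as [He1 | [e [Hex He2]]].
    + left. exists tstar. split. eapply red_trans; eauto.
      split. apply red_refl.
      exists (ms ++ [n]). split.
      * apply Forall2_app. apply upd_conv; auto.
        constructor; [|constructor]. simpl. unfold upd. rewrite Nat.eqb_refl. apply red_refl.
      * apply (A_IR2 S HS P ms n Hlms He1).
    + right. exists e. split. eapply red_trans; eauto.
      eapply (A_IR3 S HS); eauto.
  - right. eexists. split.
    { eapply red_trans. apply Hcase. eapply red_trans. exact Hq. exact Hq2.
      eapply red_trans. apply red1, s_case_r. eapply red_trans. apply red1, s_beta.
      simpl. rewrite (subst_wsc d 0) by (auto; lia). apply red_refl. }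
    simpl. intros p _ [_ [ms' [Hf Hi]]]. exfalso.
    apply Forall2_app_inv_l in Hf. destruct Hf as [l1 [l2 [H1 [H2 ->]]]].
    apply (upd_conv S rho y _ ts Hocc) in H1. fold ts' in H1. apply Huniq in H1. subst l1.
    inversion H2 as [|t0 k0 tl0 kl0 H3 H4]; subst. inversion H4; subst. simpl in H3. unfold upd in H3. rewrite Nat.eqb_refl in H3.
    assert (k0 = m).
    { eapply (A_num_uniq S HS (tfst (tpair (num m) d))).
      - split. apply num_wsc. exact Hdc.
      - eapply T_fst. apply T_pair. apply num_typed. exact Hdt.
      - exact H3.
      - apply red1, s_fst. }
    subst. eapply (A_IR1 S HS s P ms m Hs Hlms Hq2). exact Hi.
Qed.
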